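(* Let $A(l_1,l_2)\in\mathbb{C}[l_1,l_2]$ be a polynomial of degree at most $R$ in each of $l_1$ and $l_2$, and assume that $T_{l_1,l_2}A(l_1,l_2)$ has total degree at most $R$ (i.e. is a linear combination of monomials $l_1^ml_2^{m'}$ with $m+m'\le R$). Then $$\sum_{l_1=k_1}^{k_2}\sum_{l_2=k_2}^{k_3}A(l_1,l_2)-A(k_2,k_2)$$ is a polynomial in $k_1,k_2,k_3$ of degree at most $R+2$ in $k_2$. Moreover, if $T_{l_1,l_2}A(l_1,l_2)=0$, then this polynomial has degree at most $R+1$ in $k_2$.
   Context: Summation over an interval is extended to all integer endpoints: $\sum_{i=a}^b f(i)=f(a)+\cdots+f(b)$ if $a\le b$, $=0$ if $b=a-1$, and $=-f(b+1)-\cdots-f(a-1)$ if $b+1\le a-1$; with this convention sums of polynomials over intervals with polynomial endpoints are polynomials. $E_x$ denotes the shift $E_xf(x)=f(x+1)$, $E_x^{-1}$ its inverse, $\Delta_x=E_x-\operatorname{id}$, and $S_{x,y}$ the swap $S_{x,y}f(x,y)=f(y,x)$; products of operators are compositions. Define $V_{x,y}=\operatorname{id}+E_x^{-1}\Delta_x\Delta_y$ and $$T_{l_1,l_2}=(\operatorname{id}+E_{l_2}E_{l_1}^{-1}S_{l_1,l_2})\,(V_{l_1,l_2}+V_{l_2,l_1})^{-1}V_{l_1,l_2},$$ where $V_{l_1,l_2}+V_{l_2,l_1}=2\operatorname{id}+(E_{l_1}^{-1}+E_{l_2}^{-1})\Delta_{l_1}\Delta_{l_2}$ is invertible on $\mathbb{C}[l_1,l_2]$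 (its inverse is the finite-on-each-polynomial series $\tfrac12\sum_{j\ge0}(-\tfrac12)^j((E_{l_1}^{-1}+E_{l_2}^{-1})\Delta_{l_1}\Delta_{l_2})^j$). *)

(* Defs.v *)
From HB Require Import structures.
From mathcomp Require Import all_boot all_order all_algebra.
From mathcomp Require Import reals.
From mathcomp Require Import mpoly.
From mathcomp.real_closed Require Import complex.

Set Implicit Arguments.
Unset Strict Implicit.
Unset Printing Implicit Defensive.

Import Order.TTheory GRing.Theory Num.Theory.
Local Open Scope ring_scope.

Section Ops.
(* C is the field of complex numbers R[i] for a real type R (any realType is
   isomorphic to the reals). *)
Variable R : realType.
Local Notation C := (R[i]).
Local Notation P2 := {mpoly C[2]}.

Definition v1 : 'I_2 := ord0.
Definition v2 : 'I_2 := ord_max.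
Definition L1 : P2 := 'X_v1.
Definition L2 : P2 := 'X_v2.

Definition E1 (p : P2) : P2 := p \mPo [tuple L1 + 1; L2].
Definition E1inv (p : P2) : P2 := p \mPo [tuple L1 - 1; L2].
Definition E2 (p : P2) : P2 := p \mPo [tuple L1; L2 + 1].
Definition E2inv (p : P2) : P2 := p \mPo [tuple L1; L2 - 1].
Definition S12 (p : P2) : P2 := p \mPo [tuple L2; L1].

Definition D1 (p : P2) : P2 := E1 p - p.
Definition D2 (p : P2) : P2 := E2 p - p.

Definition V12 (p : P2) : P2 := p + E1inv (D1 (D2 p)).
Definition V21 (p : P2) : P2 := p + E2inv (D2 (D1 p)).

(* W = (E_{l1}^{-1} + E_{l2}^{-1}) Delta_{l1} Delta_{l2}; V12 + V21 = 2 id + W *)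
Definition W (p : P2) : P2 := let q := D1 (D2 p) in E1inv q + E2inv q.

(* (V12 + V21)^{-1} p = 1/2 sum_{j>=0} (-1/2)^j W^j p.  W strictly lowers the
   total degree, so W^j p = 0 as soon as j >= msize p (= total degree + 1);
   the series is therefore the finite sum below. *)
Definition Vinv (p : P2) : P2 :=
  \sum_(j < msize p) ((2%:R)^-1 * (- (2%:R)^-1) ^+ j) *: iter j W p.

Definition Top (p : P2) : P2 :=
  let q := Vinv (V12 p) in q + E2 (E1inv (S12 q)).

End Ops.

(* Extended interval summation over integers:
   sum_{i=a}^b f i = f a + ... + f b if a <= b, 0 if b = a - 1,
   and - f (b+1) - ... - f (a-1) if b + 1 <= a - 1. *)
Definition isum (V : zmodType) (a b : int) (f : int -> V) : V :=
  if (a <= b)%R then \sum_(i < absz (b - a + 1)%R) f (a + i%:Z)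
  else - \sum_(i < absz (a - b - 1)%R) f (b + 1 + i%:Z).

Definition degvar_le (C : nzRingType) (n : nat) (p : {mpoly C[n]}) (i : 'I_n) (d : nat) :=
  forall m, m \in msupp p -> (m i <= d)%N.

Definition totdeg_le (C : nzRingType) (n : nat) (p : {mpoly C[n]}) (d : nat) :=
  forall m, m \in msupp p -> (mdeg m <= d)%N.

Definition ev2 (C : comNzRingType) (p : {mpoly C[2]}) (x y : C) : C :=
  p.@[tnth [tuple x; y]].
Definition ev3 (C : comNzRingType) (p : {mpoly C[3]}) (x y z : C) : C :=
  p.@[tnth [tuple x; y; z]].

(* Main.v *)
Require Import Defs.
From HB Require Import structures.
From mathcomp Require Import all_boot all_order all_algebra.
From mathcomp Require Import reals.
From mathcomp Require Import mpoly.
From mathcomp.real_closed Require Import complex.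
From mathcomp Require Import ring zify.

Set Implicit Arguments.
Unset Strict Implicit.
Unset Printing Implicit Defensive.

Import Order.TTheory GRing.Theory Num.Theory.
Local Open Scope ring_scope.
Section Weights.
Variable K : comNzRingType.
Variable n : nat.
Variable w : 'I_n -> nat.
Implicit Types p q : {mpoly K[n]}.

Definition wt (m : 'X_{1..n}) : nat := (\sum_i w i * m i)%N.
Definition wle p d := forall m, m \in msupp p -> (wt m <= d)%N.

Lemma wt0 : wt 0%MM = 0%N.
Proof. by rewrite /wt big1 // => i _; rewrite mnm0E muln0. Qed.

Lemma wtD m1 m2 : wt (m1 + m2)%MM = (wt m1 + wt m2)%N.
Proof. by rewrite /wt -big_split; apply: eq_bigr => i _; rewrite mnmDE mulnDr. Qed.

Lemma wtU i : wt U_(i)%MM = w i.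
Proof.
rewrite /wt (bigD1 i) //= mnm1E eqxx muln1 big1 ?addn0 // => j /negbTE.
by rewrite mnm1E eq_sym => ->; rewrite muln0.
Qed.

Lemma wle_mono p d d' : (d <= d')%N -> wle p d -> wle p d'.
Proof. by move=> h H m /H /leq_trans; apply. Qed.

Lemma wle0 d : wle 0 d.
Proof. by move=> m; rewrite msupp0. Qed.

Lemma wleC c d : wle c%:MP d.
Proof.
move=> m; rewrite msuppC; case: (c == 0) => //.
by rewrite inE => /eqP ->; rewrite wt0.
Qed.

Lemma wleD p q d : wle p d -> wle q d -> wle (p + q) d.
Proof. by move=> hp hq m /msuppD_le; rewrite mem_cat => /orP [/hp|/hq]. Qed.

Lemma wleN p d : wle p d -> wle (- p) d.
Proof. by move=> hp m; rewrite (perm_mem (msuppN p)) => /hp. Qed.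

Lemma wleB p q d : wle p d -> wle q d -> wle (p - q) d.
Proof. by move=> hp hq; apply: wleD => //; apply: wleN. Qed.

Lemma wleZ c p d : wle p d -> wle (c *: p) d.
Proof. by move=> hp m /msuppZ_le /hp. Qed.

Lemma wle_sum (I : Type) (r : seq I) (P : pred I) (F : I -> {mpoly K[n]}) d :
  (forall i, P i -> wle (F i) d) -> wle (\sum_(i <- r | P i) F i) d.
Proof.
move=> h; elim/big_ind: _ => //; first exact: wle0.
by move=> x y; apply: wleD.
Qed.

Lemma wleM p q a b : wle p a -> wle q b -> wle (p * q) (a + b).
Proof.
move=> hp hq m /msuppM_le /allpairsP [[m1 m2] /= [h1 h2 ->]].
by rewrite wtD leq_add // ?hp ?hq.
Qed.

Lemma wleX p a k : wle p a -> wle (p ^+ k) (a * k).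
Proof.
move=> hp; elim: k => [|k ih]; first by rewrite expr0 muln0; apply: wleC.
by rewrite exprS mulnS; apply: wleM.
Qed.

Lemma wle_var i : wle 'X_i (w i).
Proof. by move=> m; rewrite msuppX inE => /eqP ->; rewrite wtU. Qed.

Lemma wle_prod (I : finType) (F : I -> {mpoly K[n]}) (b : I -> nat) :
  (forall i, wle (F i) (b i)) -> wle (\prod_i F i) (\sum_i b i).
Proof.
move=> h; elim/big_rec2: _ => [|i x y _ hy]; first exact: wleC.
exact: wleM.
Qed.

End Weights.

Section Comp.
Variable K : comNzRingType.
Variables n k : nat.
Variable w : 'I_n -> nat.

Lemma wle_comp (p : {mpoly K[k]}) (lq : k.-tuple {mpoly K[n]}) (e : 'I_k -> nat) d :
  (forall j, wle w (tnth lq j) (e j)) -> wle e p d -> wle w (p \mPo lq) d.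
Proof.
move=> hl hp; rewrite comp_mpolyEX big_seq; apply: wle_sum => m /hp hm.
apply: wleZ; rewrite comp_mpolyX; apply: (wle_mono hm).
apply: wle_prod => i; exact: wleX.
Qed.
End Comp.
Definition wv n (i : 'I_n) : 'I_n -> nat := fun j => nat_of_bool (j == i).
Definition w1 n : 'I_n -> nat := fun _ => 1%N.

Lemma wt_wv n (i : 'I_n) m : wt (wv i) m = m i.
Proof.
rewrite /wt /wv (bigD1 i) //= eqxx mul1n big1 ?addn0 // => j /negbTE.
by move=> ->; rewrite mul0n.
Qed.

Lemma degvarE (K : comNzRingType) n (p : {mpoly K[n]}) i d :
  degvar_le p i d <-> wle (wv i) p d.
Proof. by split=> h m /h; rewrite wt_wv. Qed.

Lemma totdegE (K : comNzRingType) n (p : {mpoly K[n]}) d :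
  totdeg_le p d <-> wle (@w1 n) p d.
Proof.
have e : forall m : 'X_{1..n}, wt (@w1 n) m = mdeg m.
  by move=> m; rewrite mdegE /wt; apply: eq_bigr => i _; rewrite mul1n.
by split=> h m /h; rewrite e.
Qed.

Section Eval.
Variable R : realType.
Local Notation C := (R[i]).
Local Notation P2 := {mpoly C[2]}.
Implicit Types p q : P2.

Lemma mev_comp n (p : P2) (a b : {mpoly C[n]}) v :
  (p \mPo [tuple a; b]).@[v] = ev2 p a.@[v] b.@[v].
Proof.
rewrite /ev2 comp_mpoly_meval; apply: meval_eq => i.
by case: i => [[|[|//]] Hi]; rewrite !(tnth_nth 0).
Qed.

Lemma ev2_comp p a b x y : ev2 (p \mPo [tuple a; b]) x y = ev2 p (ev2 a x y) (ev2 b x y).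
Proof. exact: mev_comp. Qed.

Lemma ev2L1 x y : ev2 (L1 R) x y = x.
Proof. by rewrite /ev2 /L1 mevalXU (tnth_nth 0). Qed.
Lemma ev2L2 x y : ev2 (L2 R) x y = y.
Proof. by rewrite /ev2 /L2 mevalXU (tnth_nth 0). Qed.
Lemma ev2D p q x y : ev2 (p + q) x y = ev2 p x y + ev2 q x y.
Proof. exact: mevalD. Qed.
Lemma ev2B p q x y : ev2 (p - q) x y = ev2 p x y - ev2 q x y.
Proof. exact: mevalB. Qed.
Lemma ev2Z c p x y : ev2 (c *: p) x y = c * ev2 p x y.
Proof. exact: mevalZ. Qed.
Lemma ev2_1 x y : ev2 (1 : P2) x y = 1.
Proof. exact: meval1. Qed.
Lemma ev2_0 x y : ev2 (0 : P2) x y = 0.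
Proof. exact: meval0. Qed.
Lemma ev2_sum (I : Type) (r : seq I) (P : pred I) (F : I -> P2) x y :
  ev2 (\sum_(i <- r | P i) F i) x y = \sum_(i <- r | P i) ev2 (F i) x y.
Proof. by rewrite /ev2 raddf_sum. Qed.

Lemma ev2E1 p x y : ev2 (E1 p) x y = ev2 p (x + 1) y.
Proof. by rewrite /E1 ev2_comp ev2D ev2L1 ev2_1 ev2L2. Qed.
Lemma ev2E1inv p x y : ev2 (E1inv p) x y = ev2 p (x - 1) y.
Proof. by rewrite /E1inv ev2_comp ev2B ev2L1 ev2_1 ev2L2. Qed.
Lemma ev2E2 p x y : ev2 (E2 p) x y = ev2 p x (y + 1).
Proof. by rewrite /E2 ev2_comp ev2D ev2L2 ev2_1 ev2L1. Qed.
Lemma ev2E2inv p x y : ev2 (E2inv p) x y = ev2 p x (y - 1).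
Proof. by rewrite /E2inv ev2_comp ev2B ev2L2 ev2_1 ev2L1. Qed.
Lemma ev2S12 p x y : ev2 (S12 p) x y = ev2 p y x.
Proof. by rewrite /S12 ev2_comp ev2L1 ev2L2. Qed.

Definition Df (f : C -> C -> C) x y := f (x + 1) (y + 1) - f (x + 1) y - f x (y + 1) + f x y.
Definition Wf (f : C -> C -> C) x y := Df f (x - 1) y + Df f x (y - 1).

Lemma ev2D12 p x y : ev2 (D1 (D2 p)) x y = Df (ev2 p) x y.
Proof.
rewrite /D1 ev2B ev2E1 /D2 !ev2B !ev2E2 /Df.
by move: (ev2 p) => f; ring.
Qed.
Lemma ev2W p x y : ev2 (W p) x y = Wf (ev2 p) x y.
Proof.
rewrite /W ev2D /Wf; congr (_ + _).
  by rewrite ev2E1inv ev2D12.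
by rewrite ev2E2inv ev2D12.
Qed.
Lemma ev2V12 p x y : ev2 (V12 p) x y = ev2 p x y + Df (ev2 p) (x - 1) y.
Proof. by rewrite /V12 ev2D; congr (_ + _); rewrite ev2E1inv ev2D12. Qed.
Lemma ev2Top p x y : ev2 (Top p) x y =
  ev2 (Vinv (V12 p)) x y + ev2 (Vinv (V12 p)) (y + 1) (x - 1).
Proof.
rewrite /Top; move: (Vinv (V12 p)) => q /=.
by rewrite ev2D; congr (_ + _); rewrite ev2E2 ev2E1inv ev2S12.
Qed.

End Eval.
Section Slices.
Variable R : realType.
Local Notation C := (R[i]).
Local Notation P2 := {mpoly C[2]}.

Definition xs (n : nat) (f : C -> C -> C) :=
  forall y, exists2 q : {poly C}, (size q <= n)%N & forall x, f x y = q.[x].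

Lemma xs_ext n f g : (forall x y, f x y = g x y) -> xs n f -> xs n g.
Proof. by move=> e h y; have [q hq hf] := h y; exists q => // x; rewrite -e. Qed.

Lemma xs_le n n' f : (n <= n')%N -> xs n f -> xs n' f.
Proof. by move=> le h y; have [q hq hf] := h y; exists q => //; apply: leq_trans le. Qed.

Lemma xs_add n f g : xs n f -> xs n g -> xs n (fun x y => f x y + g x y).
Proof.
move=> hf hg y; have [q hq ef] := hf y; have [r hr eg] := hg y.
exists (q + r) => [|x]; last by rewrite hornerD ef eg.
by rewrite (leq_trans (size_polyD _ _)) // geq_max hq hr.
Qed.

Lemma xs_scale n c f : xs n f -> xs n (fun x y => c * f x y).
Proof.
move=> hf y; have [q hq ef] := hf y; exists (c *: q) => [|x].
  by rewrite (leq_trans (size_scale_leq _ _)).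
by rewrite hornerZ ef.
Qed.

Lemma xs_sub n f g : xs n f -> xs n g -> xs n (fun x y => f x y - g x y).
Proof.
move=> hf hg; apply: (@xs_ext _ (fun x y => f x y + (-1) * g x y)).
  by move=> x y; rewrite mulN1r.
by apply: xs_add => //; apply: xs_scale.
Qed.

Lemma xs_shy n c f : xs n f -> xs n (fun x y => f x (y + c)).
Proof. by move=> hf y; apply: hf. Qed.

Lemma xs_shx n c f : xs n f -> xs n (fun x y => f (x + c) y).
Proof.
move=> hf y; have [q hq ef] := hf y; exists (q \Po ('X + c%:P)) => [|x].
  by rewrite size_comp_poly2 ?size_XaddC.
by rewrite horner_comp hornerD hornerX hornerC ef.
Qed.

Lemma size_delta (q : {poly C}) : (size (q \Po ('X + 1%:P) - q)%R <= (size q).-1)%N.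
Proof.
have [->|nz] := eqVneq q 0; first by rewrite comp_poly0 subr0 size_poly0.
apply/leq_sizeP => j hj.
have s2 : size (q \Po ('X + 1%:P)) = size q by rewrite size_comp_poly2 ?size_XaddC.
rewrite coefB; move: hj; rewrite leq_eqVlt => /orP [/eqP <-|hj].
  have := lead_coef_comp q (q:=('X + 1%:P)); rewrite size_XaddC => /(_ isT).
  by rewrite lead_coefXaddC expr1n mulr1 lead_coefE s2 => ->; rewrite subrr.
rewrite !nth_default ?subrr //; first by rewrite (polySpred nz).
by rewrite s2 (polySpred nz).
Qed.

Lemma xs_delta n f : xs n f -> xs n.-1 (fun x y => f (x + 1) y - f x y).
Proof.
move=> hf y; have [q hq ef] := hf y; exists (q \Po ('X + 1%:P) - q) => [|x].
  by rewrite (leq_trans (size_delta q)) // -!subn1 leq_sub2r.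
by rewrite hornerD hornerN horner_comp hornerD hornerX hornerC !ef.
Qed.

Lemma xs_Df n f : xs n f -> xs n.-1 (Df f).
Proof.
move=> hf.
have hg : xs n (fun x y => f x (y + 1) - f x y) by apply: xs_sub => //; apply: xs_shy.
apply: xs_ext (xs_delta hg) => x y; rewrite /Df; ring.
Qed.

Lemma xs_Wf n f : xs n f -> xs n.-1 (Wf f).
Proof.
move=> hf; have h := xs_Df hf.
by apply: xs_add; [apply: (xs_shx (-1) h) | apply: (xs_shy (-1) h)].
Qed.

Lemma xs0 f : xs 0 f -> forall x y, f x y = 0.
Proof.
move=> hf x y; have [q hq ef] := hf y.
by move: hq; rewrite size_poly_leq0 => /eqP q0; rewrite ef q0 horner0.
Qed.

Lemma mdeg_ge (n : nat) (m : 'X_{1..n}) i : (m i <= mdeg m)%N.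
Proof. by rewrite mdegE (bigD1 i) //= leq_addr. Qed.

Lemma ev2E (p : P2) x y :
  ev2 p x y = \sum_(m <- msupp p) p@_m * (x ^+ m v1 * y ^+ m v2).
Proof.
rewrite /ev2 mevalE; apply: eq_bigr => m _; congr (_ * _).
rewrite big_ord_recr big_ord_recr big_ord0 /= !(tnth_nth 0) /= mul1r.
by have -> : widen_ord (leqnSn 1) ord_max = v1 by apply: val_inj.
Qed.

Lemma xs_ev (p : P2) : xs (msize p) (ev2 p).
Proof.
move=> y.
exists (\sum_(m <- msupp p) (p@_m * y ^+ m v2) *: 'X^(m v1)) => [|x].
  rewrite (leq_trans (size_sum _ _ _)) //; apply/bigmax_leqP_seq => m hm _.
  rewrite (leq_trans (size_scale_leq _ _)) // size_polyXn.
  exact: leq_ltn_trans (mdeg_ge m v1) (msize_mdeg_lt hm).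
rewrite ev2E horner_sum; apply: eq_bigr => m _.
by rewrite hornerZ hornerXn; ring.
Qed.

End Slices.
Section Key.
Variable R : realType.
Local Notation C := (R[i]).
Local Notation P2 := {mpoly C[2]}.

Lemma ev2_iterW (p : P2) j x y : ev2 (iter j.+1 (@W R) p) x y = Wf (ev2 (iter j (@W R) p)) x y.
Proof. by rewrite iterS ev2W. Qed.

Lemma xs_iter (p : P2) j : xs (msize p - j) (ev2 (iter j (@W R) p)).
Proof.
elim: j => [|j ih]; first by rewrite subn0; apply: xs_ev.
rewrite subnS; apply: (xs_ext _ (xs_Wf ih)) => x y; by rewrite ev2_iterW.
Qed.

Lemma nilp (p : P2) j x y : (msize p <= j)%N -> ev2 (iter j (@W R) p) x y = 0.
Proof.
move=> h; have := xs_iter p j; rewrite (eqP (_ : msize p - j == 0)%N).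
  by move/xs0; apply.
by rewrite subn_eq0.
Qed.

Lemma Wf_ext (f g : C -> C -> C) x y : (forall a b, f a b = g a b) -> Wf f x y = Wf g x y.
Proof. by move=> e; rewrite /Wf /Df !e. Qed.

Lemma WfD (f g : C -> C -> C) x y :
  Wf (fun a b => f a b + g a b) x y = Wf f x y + Wf g x y.
Proof. by rewrite /Wf /Df; ring. Qed.

Lemma WfZ c (f : C -> C -> C) x y : Wf (fun a b => c * f a b) x y = c * Wf f x y.
Proof. by rewrite /Wf /Df; ring. Qed.

Lemma Wf_sum N (F : nat -> C -> C -> C) x y :
  Wf (fun a b => \sum_(j < N) F j a b) x y = \sum_(j < N) Wf (F j) x y.
Proof.
elim: N => [|N ih].
  rewrite big_ord0 (@Wf_ext _ (fun a b => 0 * 0)); last by move=> a b; rewrite big_ord0 mul0r.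
  by rewrite WfZ mul0r.
rewrite big_ord_recr /= -ih -WfD; apply: Wf_ext => a b.
by rewrite big_ord_recr.
Qed.

Lemma tele (a : nat -> C) N : \sum_(j < N) (a j - a j.+1) = a 0%N - a N.
Proof.
elim: N => [|N ih]; first by rewrite big_ord0 subrr.
by rewrite big_ord_recr /= ih addrA subrK.
Qed.

Lemma VinvE (p : P2) x y :
  2 * ev2 (Vinv p) x y + Wf (ev2 (Vinv p)) x y = ev2 p x y.
Proof.
set N := msize p.
pose c (j : nat) : C := (2%:R)^-1 * (- (2%:R)^-1) ^+ j.
pose g j := ev2 (iter j (@W R) p).
have e1 : forall a b, ev2 (Vinv p) a b = \sum_(j < N) c j * g j a b.
  by move=> a b; rewrite /Vinv ev2_sum; apply: eq_bigr => j _; rewrite ev2Z.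
rewrite (Wf_ext _ _ e1) (Wf_sum N (fun j a b => c j * g j a b)) e1.
rewrite [X in _ + X](eq_bigr (fun j : 'I_N => c j * g j.+1 x y)); last first.
  by move=> j _; rewrite WfZ /g -ev2_iterW.
pose t : C := - (2%:R)^-1.
have h2 : (2%:R : C) != 0 by rewrite pnatr_eq0.
rewrite mulr_sumr -big_split /=.
rewrite (eq_bigr (fun j : 'I_N => t ^+ j * g j x y - t ^+ j.+1 * g j.+1 x y)).
  rewrite (tele (fun j => t ^+ j * g j x y)).
  have -> : g N x y = 0 by rewrite /g nilp.
  by rewrite mulr0 subr0 expr0 mul1r.
by move=> j _; rewrite /c /t /g exprS; field.
Qed.

Definition Lf (f : C -> C -> C) k := f k k + f (k + 1) (k + 1) - f k (k + 1).

Lemma keyL (X : P2) k : Lf (ev2 (Top X)) k = Lf (ev2 X) k.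
Proof.
rewrite /Lf !ev2Top.
have h := VinvE (V12 X) (k + 1) k.
rewrite ev2V12 /Wf /Df !addrK !subrK in h.
move: h; move: (ev2 (Vinv (V12 X))) (ev2 X) => q g h.
rewrite !addrK.
apply/eqP; rewrite -subr_eq0; move/eqP: h; rewrite -subr_eq0 => /eqP h.
rewrite -[X in _ == X]h; apply/eqP; ring.
Qed.

End Key.
Section Jpres.
Variable R : realType.
Local Notation C := (R[i]).
Local Notation P2 := {mpoly C[2]}.

Lemma wt2 (w : 'I_2 -> nat) (m : 'X_{1..2}) : wt w m = (w v1 * m v1 + w v2 * m v2)%N.
Proof.
rewrite /wt big_ord_recr big_ord_recr big_ord0 /= add0n.
by have -> : widen_ord (leqnSn 1) ord_max = v1 by apply: val_inj.
Qed.

Lemma wle_comp2 n (w : 'I_n -> nat) (p : P2) (a b : {mpoly C[n]}) ea eb d :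
  wle w a ea -> wle w b eb ->
  (forall m, m \in msupp p -> (ea * m v1 + eb * m v2 <= d)%N) ->
  wle w (p \mPo [tuple a; b]) d.
Proof.
move=> ha hb hp.
apply: (@wle_comp _ _ _ w p _ (fun j : 'I_2 => if j == v1 then ea else eb)).
  by case=> [[|[|//]] Hj]; rewrite (tnth_nth 0) /=.
by move=> m /hp; rewrite wt2.
Qed.

Definition J d (p : P2) := wle (wv v1) p d /\ wle (wv v2) p d.
Definition isX (a : P2) := wle (wv v1) a 1 /\ wle (wv v2) a 0.
Definition isY (a : P2) := wle (wv v1) a 0 /\ wle (wv v2) a 1.

Lemma wv11 : wv v1 v1 = 1%N. Proof. by []. Qed.
Lemma wv12 : wv v1 v2 = 0%N. Proof. by []. Qed.
Lemma wv21 : wv v2 v1 = 0%N. Proof. by []. Qed.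
Lemma wv22 : wv v2 v2 = 1%N. Proof. by []. Qed.

Lemma J_straight d p a b : J d p -> isX a -> isY b -> J d (p \mPo [tuple a; b]).
Proof.
move=> [h1 h2] [a1 a2] [b1 b2]; split.
  apply: (wle_comp2 a1 b1) => m /h1; rewrite wt_wv.
  by rewrite mul1n mul0n addn0.
apply: (wle_comp2 a2 b2) => m /h2; rewrite wt_wv.
by rewrite mul1n mul0n add0n.
Qed.

Lemma J_swap d p a b : J d p -> isY a -> isX b -> J d (p \mPo [tuple a; b]).
Proof.
move=> [h1 h2] [a1 a2] [b1 b2]; split.
  apply: (wle_comp2 a1 b1) => m /h2; rewrite wt_wv.
  by rewrite mul1n mul0n add0n.
apply: (wle_comp2 a2 b2) => m /h1; rewrite wt_wv.
by rewrite mul1n mul0n addn0.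
Qed.

Lemma wle1 n (w : 'I_n -> nat) d : wle w (1 : {mpoly C[n]}) d.
Proof. exact: wleC. Qed.

Lemma isX_L1 : isX (L1 R). Proof. by split; apply: wle_var. Qed.
Lemma isY_L2 : isY (L2 R). Proof. by split; apply: wle_var. Qed.
Lemma isX_D a : isX a -> isX (a + 1).
Proof. by case=> h1 h2; split; apply: wleD => //; apply: wle1. Qed.
Lemma isX_B a : isX a -> isX (a - 1).
Proof. by case=> h1 h2; split; apply: wleB => //; apply: wle1. Qed.
Lemma isY_D a : isY a -> isY (a + 1).
Proof. by case=> h1 h2; split; apply: wleD => //; apply: wle1. Qed.
Lemma isY_B a : isY a -> isY (a - 1).
Proof. by case=> h1 h2; split; apply: wleB => //; apply: wle1. Qed.

Lemma J_add d p q : J d p -> J d q -> J d (p + q).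
Proof. by case=> ? ? [? ?]; split; apply: wleD. Qed.
Lemma J_sub d p q : J d p -> J d q -> J d (p - q).
Proof. by case=> ? ? [? ?]; split; apply: wleB. Qed.
Lemma J_scale d c p : J d p -> J d (c *: p).
Proof. by case=> ? ?; split; apply: wleZ. Qed.
Lemma J_sum d (I : Type) (r : seq I) (P : pred I) (F : I -> P2) :
  (forall i, P i -> J d (F i)) -> J d (\sum_(i <- r | P i) F i).
Proof. by move=> h; split; apply: wle_sum => i /h []. Qed.

Lemma J_E1 d p : J d p -> J d (E1 p).
Proof. by move=> h; apply: J_straight => //; [apply: isX_D; apply: isX_L1 | apply: isY_L2]. Qed.
Lemma J_E1inv d p : J d p -> J d (E1inv p).
Proof. by move=> h; apply: J_straight => //; [apply: isX_B; apply: isX_L1 | apply: isY_L2]. Qed.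
Lemma J_E2 d p : J d p -> J d (E2 p).
Proof. by move=> h; apply: J_straight => //; [apply: isX_L1 | apply: isY_D; apply: isY_L2]. Qed.
Lemma J_E2inv d p : J d p -> J d (E2inv p).
Proof. by move=> h; apply: J_straight => //; [apply: isX_L1 | apply: isY_B; apply: isY_L2]. Qed.
Lemma J_S12 d p : J d p -> J d (S12 p).
Proof. by move=> h; apply: J_swap => //; [apply: isY_L2 | apply: isX_L1]. Qed.

Lemma J_D12 d p : J d p -> J d (D1 (D2 p)).
Proof.
move=> h; have h2 : J d (D2 p) by apply: J_sub => //; apply: J_E2.
by apply: J_sub => //; apply: J_E1.
Qed.
Lemma J_W d p : J d p -> J d (W p).
Proof. by move=> h; rewrite /W; apply: J_add; [apply: J_E1inv | apply: J_E2inv]; apply: J_D12. Qed.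
Lemma J_V12 d p : J d p -> J d (V12 p).
Proof. by move=> h; rewrite /V12; apply: J_add => //; apply: J_E1inv; apply: J_D12. Qed.
Lemma J_iter d p j : J d p -> J d (iter j (@W R) p).
Proof. by move=> h; elim: j => //= j ih; apply: J_W. Qed.
Lemma J_Vinv d p : J d p -> J d (Vinv p).
Proof. by move=> h; rewrite /Vinv; apply: J_sum => j _; apply: J_scale; apply: J_iter. Qed.
Lemma J_Top d p : J d p -> J d (Top p).
Proof.
move=> h; rewrite /Top; have hq := J_Vinv (J_V12 h).
by apply: J_add => //; apply: J_E2; apply: J_E1inv; apply: J_S12.
Qed.

End Jpres.
Section Faul.
Variable R : realType.
Local Notation C := (R[i]).
Local Notation P2 := {mpoly C[2]}.

Definition fstep (i : nat) (s : seq {poly C}) : {poly C} :=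
  ((i.+1)%:R)^-1 *: ('X^(i.+1) - \sum_(j < i) ('C(i.+1, j))%:R *: s`_j).
Fixpoint fseq (n : nat) : seq {poly C} :=
  if n is n'.+1 then rcons (fseq n') (fstep n' (fseq n')) else [::].
Definition Fh i := fstep i (fseq i).

Lemma size_fseq n : size (fseq n) = n.
Proof. by elim: n => //= n ih; rewrite size_rcons ih. Qed.

Lemma nth_fseq n j : (j < n)%N -> (fseq n)`_j = Fh j.
Proof.
elim: n => // n ih; rewrite ltnS leq_eqVlt => /orP [/eqP ->|hj] /=.
  by rewrite nth_rcons size_fseq ltnn eqxx.
by rewrite nth_rcons size_fseq hj ih.
Qed.

Lemma FhE i : Fh i = ((i.+1)%:R)^-1 *: ('X^(i.+1) - \sum_(j < i) ('C(i.+1, j))%:R *: Fh j).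
Proof.
rewrite /Fh /fstep; congr (_ *: (_ - _)); apply: eq_bigr => j _.
by rewrite nth_fseq.
Qed.

Lemma Fh_horner i z : (Fh i).[z] =
  ((i.+1)%:R)^-1 * (z ^+ i.+1 - \sum_(j < i) ('C(i.+1, j))%:R * (Fh j).[z]).
Proof.
rewrite FhE hornerZ hornerD hornerN hornerXn horner_sum; congr (_ * (_ - _)).
by apply: eq_bigr => j _; rewrite hornerZ.
Qed.

Lemma Fh_delta i x : (Fh i).[x + 1] - (Fh i).[x] = x ^+ i.
Proof.
elim/ltn_ind: i => i ih.
rewrite !Fh_horner -mulrBr.
have e : (x + 1) ^+ i.+1 = \sum_(j < i) ('C(i.+1, j))%:R * x ^+ j
            + (i.+1)%:R * x ^+ i + x ^+ i.+1.
  rewrite exprD1n big_ord_recr big_ord_recr /= binn binSn mulr1n.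
  congr (_ + _ + _); last by rewrite mulr_natl.
  by apply: eq_bigr => j _; rewrite mulr_natl.
have e2 : \sum_(j < i) ('C(i.+1, j))%:R * (Fh j).[x + 1] -
          \sum_(j < i) ('C(i.+1, j))%:R * (Fh j).[x] =
          \sum_(j < i) ('C(i.+1, j))%:R * x ^+ j.
  rewrite -sumrB; apply: eq_bigr => j _; rewrite -mulrBr ih //.
have h : ((i.+1)%:R : C) != 0 by rewrite pnatr_eq0.
rewrite (_ : _ - _ - _ = (i.+1)%:R * x ^+ i); first by rewrite mulrA mulVf // mul1r.
rewrite e -e2; ring.
Qed.

Lemma Fh0 i : (Fh i).[0] = 0.
Proof.
elim/ltn_ind: i => i ih; rewrite Fh_horner expr0n /= big1 ?subrr ?mulr0 //.
by move=> j _; rewrite ih // mulr0.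
Qed.

Lemma size_Fh i : (size (Fh i) <= i.+2)%N.
Proof.
elim/ltn_ind: i => i ih; rewrite FhE (leq_trans (size_scale_leq _ _)) //.
rewrite (leq_trans (size_polyD _ _)) // geq_max size_polyXn leqnn /=.
rewrite size_polyN (leq_trans (size_sum _ _ _)) //; apply/bigmax_leqP => j _.
rewrite (leq_trans (size_scale_leq _ _)) //.
apply: leq_trans (ih j (ltn_ord j)) _; rewrite !ltnS; exact: ltnW (ltn_ord j).
Qed.

Lemma size_Fh' k : ((size (Fh k)).-1 <= k.+1)%N.
Proof. by have := size_Fh k; case: (size _). Qed.

Definition pM n (v : 'I_n) (q : {poly C}) : {mpoly C[n]} :=
  \sum_(j < size q) q`_j *: 'X_v ^+ j.

Lemma mevalXn n (u : 'I_n -> C) (v : 'I_n) j : ('X_v ^+ j : {mpoly C[n]}).@[u] = u v ^+ j.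
Proof. by elim: j => [|j ih]; rewrite ?expr0 ?meval1 // !exprS mevalM mevalXU ih. Qed.

Lemma meval_pM n (u : 'I_n -> C) v q : (pM v q).@[u] = q.[u v].
Proof.
rewrite /pM raddf_sum horner_coef; apply: eq_bigr => j _.
by rewrite /= mevalZ mevalXn.
Qed.

Lemma wle_pM n (w : 'I_n -> nat) v q : wle w (pM v q) ((size q).-1 * w v).
Proof.
rewrite /pM; apply: wle_sum => j _; apply: wleZ.
apply: (wle_mono _ (wleX (k:=j) (wle_var w (i:=v)))).
by rewrite mulnC leq_mul2r -ltnS prednK ?ltn_ord ?orbT // (leq_ltn_trans _ (ltn_ord j)).
Qed.

Definition Phi (p : P2) : P2 :=
  \sum_(m <- msupp p) p@_m *: (pM v1 (Fh (m v1)) * pM v2 (Fh (m v2))).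

Lemma ev2Phi p x y :
  ev2 (Phi p) x y = \sum_(m <- msupp p) p@_m * ((Fh (m v1)).[x] * (Fh (m v2)).[y]).
Proof.
rewrite /Phi ev2_sum; apply: eq_bigr => m _.
by rewrite ev2Z /ev2 mevalM !meval_pM !(tnth_nth 0).
Qed.

Lemma Phi_D p x y : Df (ev2 (Phi p)) x y = ev2 p x y.
Proof.
rewrite /Df !ev2Phi -!sumrB -big_split ev2E /=; apply: eq_bigr => m _.
rewrite -(Fh_delta (m v1) x) -(Fh_delta (m v2) y); ring.
Qed.

Lemma Phi_x0 p x : ev2 (Phi p) x 0 = 0.
Proof. by rewrite ev2Phi big1 // => m _; rewrite Fh0 !mulr0. Qed.
Lemma Phi_0y p y : ev2 (Phi p) 0 y = 0.
Proof. by rewrite ev2Phi big1 // => m _; rewrite Fh0 mul0r mulr0. Qed.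

Lemma wle_Phi (w : 'I_2 -> nat) p d :
  (forall m, m \in msupp p -> ((m v1).+1 * w v1 + (m v2).+1 * w v2 <= d)%N) ->
  wle w (Phi p) d.
Proof.
move=> h; rewrite /Phi big_seq; apply: wle_sum => m /h hm; apply: wleZ.
apply: (wle_mono _ (wleM (wle_pM w (v:=v1) (q:=Fh (m v1))) (wle_pM w (v:=v2) (q:=Fh (m v2))))).
by apply: leq_trans hm; apply: leq_add; apply: leq_mul => //; apply: size_Fh'.
Qed.

Lemma Phi0 : Phi 0 = 0.
Proof. by rewrite /Phi msupp0 big_nil. Qed.

End Faul.
Section IntSums.
Variable V : zmodType.

Lemma sum_tele_int (F : int -> V) (a : int) n :
  \sum_(i < n) (F (a + i%:Z + 1) - F (a + i%:Z)) = F (a + n%:Z) - F a.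
Proof.
elim: n => [|n ih]; first by rewrite big_ord0 addr0 subrr.
rewrite big_ord_recr /= ih.
have -> : a + n.+1%:Z = a + n%:Z + 1 by lia.
by rewrite addrC addrA subrK.
Qed.

Lemma isum_tele (F f : int -> V) (a b : int) :
  (forall z, F (z + 1) - F z = f z) -> isum a b f = F (b + 1) - F a.
Proof.
move=> hF; rewrite /isum; case: ifP => hab.
  have e : (absz (b - a + 1)%R)%:Z = b - a + 1.
    lia.
  rewrite (eq_bigr (fun i : 'I_(absz (b - a + 1)%R) => F (a + i%:Z + 1) - F (a + i%:Z))).
    by rewrite sum_tele_int e (_ : a + (b - a + 1) = b + 1) //; lia.
  by move=> i _; rewrite hF.
have hba : b < a by rewrite ltNge hab.
have e : (absz (a - b - 1)%R)%:Z = a - b - 1.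
  lia.
rewrite (eq_bigr (fun i : 'I_(absz (a - b - 1)%R) => F (b + 1 + i%:Z + 1) - F (b + 1 + i%:Z))).
  rewrite sum_tele_int e (_ : b + 1 + (a - b - 1) = a); first by rewrite opprB.
  lia.
by move=> i _; rewrite hF.
Qed.

End IntSums.

Section Grid.
Variable R : realType.
Local Notation C := (R[i]).

Lemma int_const (u : int -> C) : (forall z, u (z + 1) = u z) -> forall z, u z = u 0.
Proof.
move=> h; case=> n.
  elim: n => // n ih; by rewrite -ih intS addrC h.
rewrite NegzE; elim: n => [|n ih].
  by rewrite -(h (- 1%:Z)) addNr.
rewrite -(h _) (_ : - n.+2%:Z + 1 = - n.+1%:Z) //; lia.
Qed.

Lemma intr1D (z : int) : ((z + 1)%:~R : C) = z%:~R + 1.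
Proof. by rewrite intrD. Qed.

End Grid.

Section Grid2.
Variable R : realType.
Local Notation C := (R[i]).

Lemma lin_close (l r e1 e2 : C) : e1 = e2 -> l - r = e1 - e2 -> l = r.
Proof. by move=> h1 h2; apply/eqP; rewrite -subr_eq0 h2 h1 subrr. Qed.

Lemma grid (Z : C -> C -> C) : (forall x y, Df Z x y = 0) ->
  forall a b : int, Z a%:~R b%:~R = Z a%:~R 0 + Z 0 b%:~R - Z 0 0.
Proof.
move=> hD.
have c : forall x (b : int), Z (x + 1) b%:~R - Z x b%:~R = Z (x + 1) 0 - Z x 0.
  move=> x b.
  have hu : forall z : int, (fun b : int => Z (x + 1) b%:~R - Z x b%:~R) (z + 1)
                         = (fun b : int => Z (x + 1) b%:~R - Z x b%:~R) z.
    move=> z /=; have := hD x z%:~R; rewrite /Df intr1D => h.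
    by apply: (lin_close h); ring.
  by have := int_const hu b; rewrite /= mulr0z.
move=> a b.
have hv : forall z : int, (fun a : int => Z a%:~R b%:~R - Z a%:~R 0) (z + 1)
                       = (fun a : int => Z a%:~R b%:~R - Z a%:~R 0) z.
  move=> z /=; rewrite intr1D; have e := c z%:~R b.
  by apply: (lin_close e); ring.
have := int_const hv a; rewrite /= mulr0z => e.
by apply: (lin_close e); ring.
Qed.

End Grid2.
Section Comm.
Variable R : realType.
Local Notation C := (R[i]).
Local Notation P2 := {mpoly C[2]}.
Implicit Types f g : C -> C -> C.

Lemma Df_ext f g x y : (forall a b, f a b = g a b) -> Df f x y = Df g x y.
Proof. by move=> e; rewrite /Df !e. Qed.

Lemma DfW f x y : Df (Wf f) x y = Wf (Df f) x y.
Proof. rewrite /Df /Wf /Df !addrK !subrK; ring. Qed.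

Lemma Df_lin (c : C) f g x y :
  Df (fun a b => c * f a b + g a b) x y = c * Df f x y + Df g x y.
Proof. by rewrite /Df; ring. Qed.

Lemma WfB f g x y : Wf (fun a b => f a b - g a b) x y = Wf f x y - Wf g x y.
Proof. by rewrite /Wf /Df; ring. Qed.

Lemma DfV f x y : Df (fun a b => f a b + Df f (a - 1) b) x y = Df f x y + Df (Df f) (x - 1) y.
Proof. by rewrite /Df !addrK !subrK; ring. Qed.

Lemma uniq0 (z : P2) : (forall x y, 2 * ev2 z x y + Wf (ev2 z) x y = 0) ->
  forall x y, ev2 z x y = 0.
Proof.
move=> h.
pose t : C := - (2%:R)^-1.
have h2 : (2%:R : C) != 0 by rewrite pnatr_eq0.
have P : forall j a b, ev2 (iter j (@W R) z) a b = t * ev2 (iter j.+1 (@W R) z) a b.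
  elim=> [|j ih] a b.
    rewrite [in RHS]ev2_iterW /=; have := h a b; move: (ev2 z a b) (Wf (ev2 z) a b) => u v e.
    apply/eqP; rewrite -subr_eq0; apply/eqP.
    rewrite (_ : _ - _ = (2%:R)^-1 * (2 * u + v)); first by rewrite e mulr0.
    by rewrite /t; field.
  rewrite [LHS]ev2_iterW (Wf_ext _ _ ih) WfZ.
  by rewrite [in RHS]ev2_iterW.
have Q : forall j a b, ev2 z a b = t ^+ j * ev2 (iter j (@W R) z) a b.
  elim=> [|j ih] a b; first by rewrite expr0 mul1r.
  by rewrite [LHS]ih [in LHS](P j) exprS mulrA [t * _]mulrC.
move=> x y; rewrite (Q (msize z)) nilp ?mulr0 //.
Qed.

Lemma Dcomm_fun (fz q qA tX tA vX vA fX fA : C -> C -> C) :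
  ((forall x y, 2 * fz x y + Wf fz x y = 0) -> forall x y, fz x y = 0) ->
  (forall a b, fz a b = Df q a b - qA a b) ->
  (forall x y, 2 * q x y + Wf q x y = vX x y) ->
  (forall x y, 2 * qA x y + Wf qA x y = vA x y) ->
  (forall x y, tX x y = q x y + q (y + 1) (x - 1)) ->
  (forall x y, tA x y = qA x y + qA (y + 1) (x - 1)) ->
  (forall x y, vX x y = fX x y + Df fX (x - 1) y) ->
  (forall x y, vA x y = fA x y + Df fA (x - 1) y) ->
  (forall x y, Df fX x y = fA x y) ->
  forall x y, Df tX x y = tA x y.
Proof.
move=> U ez e1 e2 hT hTA hV hVA hXA.
have Dq : forall x y, Df q x y = qA x y.
  have z0 : forall a b, fz a b = 0.
    apply: U => a b.
    rewrite (Wf_ext _ _ ez) WfB -DfW ez.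
    have e3 : Df (fun a b => 2 * q a b + Wf q a b) a b = Df vX a b.
      by apply: Df_ext => a' b'; rewrite e1.
    rewrite Df_lin in e3.
    have e4 : Df vX a b = vA a b.
      rewrite (Df_ext _ _ hV) DfV hVA hXA.
      by congr (_ + _); apply: Df_ext.
    have e5 := e2 a b.
    apply: (lin_close (e1 := 2 * Df q a b + Df (Wf q) a b - (2 * qA a b + Wf qA a b))).
      by rewrite e3 e4 e5 subrr.
    ring.
  by move=> x y; apply/eqP; rewrite -subr_eq0 -ez z0.
move=> x y.
rewrite (Df_ext _ _ hT) hTA.
rewrite -!Dq /Df !addrK !subrK; ring.
Qed.

Lemma Dcomm (X A : P2) : (forall x y, Df (ev2 X) x y = ev2 A x y) ->
  forall x y, Df (ev2 (Top X)) x y = ev2 (Top A) x y.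
Proof.
move=> hXA.
pose z := D1 (D2 (Vinv (V12 X))) - Vinv (V12 A).
have ez : forall a b, ev2 z a b = Df (ev2 (Vinv (V12 X))) a b - ev2 (Vinv (V12 A)) a b.
  by move=> a b; rewrite /z ev2B ev2D12.
exact: (Dcomm_fun (uniq0 (z:=z)) ez (VinvE (V12 X)) (VinvE (V12 A)) (ev2Top X) (ev2Top A)
  (ev2V12 X) (ev2V12 A) hXA).
Qed.

End Comm.
Section Final.
Variable R : realType.
Local Notation C := (R[i]).
Local Notation P2 := {mpoly C[2]}.
Local Notation P3 := {mpoly C[3]}.

Lemma toC (x y : C) : x = y -> x = y. Proof. by []. Qed.

Lemma isum_teleC (F f : int -> C) (a b : int) :
  (forall z : int, F (z + 1) - F z = f z) -> isum a b f = F (b + 1) - F a.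
Proof. exact: isum_tele. Qed.

Lemma dsum (f a : C -> C -> C) (k1 k2 k3 : int) : (forall x y, Df f x y = a x y) ->
  isum k1 k2 (fun l1 => isum k2 k3 (fun l2 => a l1%:~R l2%:~R)) =
  f (k2%:~R + 1) (k3%:~R + 1) - f (k2%:~R + 1) k2%:~R - f k1%:~R (k3%:~R + 1) + f k1%:~R k2%:~R.
Proof.
move=> hD.
have inner : forall l : int, isum k2 k3 (fun l2 => a l%:~R l2%:~R) =
   (f (l%:~R + 1) (k3 + 1)%:~R - f l%:~R (k3 + 1)%:~R) - (f (l%:~R + 1) k2%:~R - f l%:~R k2%:~R).
  move=> l; apply: (isum_teleC (F := fun z : int => f (l%:~R + 1) z%:~R - f l%:~R z%:~R)) => z /=.
  rewrite -hD /Df intr1D; apply: toC; ring.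
rewrite (isum_teleC (F := fun z : int => f z%:~R (k3 + 1)%:~R - f z%:~R k2%:~R)) /=.
  rewrite !intr1D; apply: toC; ring.
move=> z /=; rewrite inner intr1D; apply: toC; ring.
Qed.

Lemma final_fun (f a tf bf : C -> C -> C) (k1 k2 k3 : int) :
  (forall x y, Df f x y = a x y) -> (forall k, Lf tf k = Lf f k) ->
  (forall x y, Df tf x y = Df bf x y) -> (forall x, bf x 0 = 0) -> (forall y, bf 0 y = 0) ->
  isum k1 k2 (fun l1 => isum k2 k3 (fun l2 => a l1%:~R l2%:~R)) - a k2%:~R k2%:~R =
  f (k2%:~R + 1) (k3%:~R + 1) - f k1%:~R (k3%:~R + 1) + f k1%:~R k2%:~R
  - (Lf bf k2%:~R + tf (k2%:~R + 1) 0 + tf 0 k2%:~R - tf 0 0).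
Proof.
move=> hD hL hDZ hb0 h0b.
rewrite (dsum _ _ _ hD) -hD.
have hZ : forall x y, Df (fun x y => tf x y - bf x y) x y = 0.
  move=> x y; have e := hDZ x y; rewrite /Df in e *.
  by apply: (lin_close e); ring.
have g := grid hZ.
have g' : forall a b : int, tf a%:~R b%:~R = bf a%:~R b%:~R + tf a%:~R 0 + tf 0 b%:~R - tf 0 0.
  move=> a' b'; have e := g a' b'; rewrite /= !hb0 !h0b in e.
  by apply: (lin_close e); ring.
have hk := hL k2%:~R.
have g1 := g' k2 k2.
have g2 := g' (k2 + 1) (k2 + 1); rewrite !intr1D in g2.
have g3 := g' k2 (k2 + 1); rewrite !intr1D in g3.
rewrite /Lf g1 g2 g3 in hk.
rewrite /Lf /Df.
move: hk; rewrite /Lf => hk.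
by apply: (lin_close hk); ring.
Qed.

End Final.
Section Assembly.
Variable R : realType.
Local Notation C := (R[i]).
Local Notation P2 := {mpoly C[2]}.
Local Notation P3 := {mpoly C[3]}.

Definition k1v : 'I_3 := ord0.
Definition k2v : 'I_3 := inord 1.
Definition k3v : 'I_3 := ord_max.
Definition K1 : P3 := 'X_k1v.
Definition K2 : P3 := 'X_k2v.
Definition K3 : P3 := 'X_k3v.

Lemma k12 : (k1v == k2v) = false.
Proof. by apply/negbTE/eqP => /(congr1 val); rewrite /= inordK. Qed.
Lemma k32 : (k3v == k2v) = false.
Proof. by apply/negbTE/eqP => /(congr1 val); rewrite /= inordK. Qed.

Lemma wK1 : wle (wv k2v) K1 0. Proof. by have := wle_var (wv k2v) (i:=k1v); rewrite /wv k12. Qed.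
Lemma wK3 : wle (wv k2v) K3 0. Proof. by have := wle_var (wv k2v) (i:=k3v); rewrite /wv k32. Qed.
Lemma wK2 : wle (wv k2v) K2 1. Proof. by have := wle_var (wv k2v) (i:=k2v); rewrite /wv eqxx. Qed.
Lemma wK2p : wle (wv k2v) (K2 + 1) 1. Proof. by apply: wleD; [apply: wK2 | apply: wleC]. Qed.
Lemma wK3p : wle (wv k2v) (K3 + 1) 0. Proof. by apply: wleD; [apply: wK3 | apply: wleC]. Qed.
Lemma wz : wle (wv k2v) (0 : P3) 0. Proof. exact: wle0. Qed.

Section Ev.
Variables a b c : C.
Local Notation v := (tnth [tuple a; b; c]).
Lemma mK1 : K1.@[v] = a. Proof. by rewrite /K1 mevalXU (tnth_nth 0). Qed.
Lemma mK2 : K2.@[v] = b. Proof. by rewrite /K2 mevalXU (tnth_nth 0) /k2v inordK. Qed.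
Lemma mK3 : K3.@[v] = c. Proof. by rewrite /K3 mevalXU (tnth_nth 0). Qed.
Lemma mK2p : (K2 + 1).@[v] = b + 1. Proof. by rewrite mevalD mK2 meval1. Qed.
Lemma mK3p : (K3 + 1).@[v] = c + 1. Proof. by rewrite mevalD mK3 meval1. Qed.
Lemma mz : (0 : P3).@[v] = 0. Proof. exact: meval0. Qed.
End Ev.

Definition Pexpr (F T B : P2) : P3 :=
  (F \mPo [tuple K2 + 1; K3 + 1]) - (F \mPo [tuple K1; K3 + 1]) + (F \mPo [tuple K1; K2])
  - ((B \mPo [tuple K2; K2]) + (B \mPo [tuple K2 + 1; K2 + 1]) - (B \mPo [tuple K2; K2 + 1])
     + (T \mPo [tuple K2 + 1; 0]) + (T \mPo [tuple 0; K2]) - (T \mPo [tuple 0; 0])).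

Lemma evP (F T B : P2) a b c :
  ev3 (Pexpr F T B) a b c =
  ev2 F (b + 1) (c + 1) - ev2 F a (c + 1) + ev2 F a b
  - (Lf (ev2 B) b + ev2 T (b + 1) 0 + ev2 T 0 b - ev2 T 0 0).
Proof.
rewrite /ev3 /Pexpr /Lf.
rewrite mevalB; congr (_ - _).
  rewrite mevalD; congr (_ + _).
    rewrite mevalB; congr (_ - _).
      by rewrite mev_comp mK2p mK3p.
    by rewrite mev_comp mK1 mK3p.
  by rewrite mev_comp mK1 mK2.
rewrite mevalB; congr (_ - _).
  rewrite mevalD; congr (_ + _).
    rewrite mevalD; congr (_ + _).
      rewrite mevalB; congr (_ - _).
        rewrite mevalD; congr (_ + _).
          by rewrite mev_comp mK2.
        by rewrite mev_comp mK2p.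
      by rewrite mev_comp mK2 mK2p.
    by rewrite mev_comp mK2p mz.
  by rewrite mev_comp mK2 mz.
by rewrite mev_comp mz.
Qed.

Lemma degP (F T B : P2) d e :
  J d F -> J d T -> wle (@w1 2) B e -> wle (wv k2v) (Pexpr F T B) (maxn e d).
Proof.
move=> [F1 F2] [T1 T2] hB.
have hd : (d <= maxn e d)%N by rewrite leq_maxr.
have he : (e <= maxn e d)%N by rewrite leq_maxl.
have hB' : forall m, m \in msupp B -> (1 * m v1 + 1 * m v2 <= maxn e d)%N.
  by move=> m /hB; rewrite wt2 => h; apply: leq_trans h he.
rewrite /Pexpr; apply: wleB; first apply: wleD; first apply: wleB.
- apply: (wle_comp2 wK2p wK3p) => m /F1; rewrite wt_wv mul1n mul0n addn0.
  by move=> h; apply: leq_trans h hd.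
- by apply: (wle_comp2 wK1 wK3p) => m _; rewrite !mul0n.
- apply: (wle_comp2 wK1 wK2) => m /F2; rewrite wt_wv mul1n mul0n add0n.
  by move=> h; apply: leq_trans h hd.
apply: wleB; first apply: wleD; first apply: wleD; first apply: wleB; first apply: wleD.
- exact: (wle_comp2 wK2 wK2).
- exact: (wle_comp2 wK2p wK2p).
- exact: (wle_comp2 wK2 wK2p).
- apply: (wle_comp2 wK2p wz) => m /T1; rewrite wt_wv mul1n mul0n addn0.
  by move=> h; apply: leq_trans h hd.
- apply: (wle_comp2 wz wK2) => m /T2; rewrite wt_wv mul1n mul0n add0n.
  by move=> h; apply: leq_trans h hd.
by apply: (wle_comp2 wz wz) => m _; rewrite !mul0n.
Qed.

Lemma core (A : P2) (d e : nat) : J d A -> wle (@w1 2) (Phi (Top A)) e ->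
  exists P : P3, degvar_le P (inord 1) (maxn e d.+1) /\
    forall k1 k2 k3 : int,
      isum k1 k2 (fun l1 => isum k2 k3 (fun l2 => ev2 A l1%:~R l2%:~R))
      - ev2 A k2%:~R k2%:~R = ev3 P k1%:~R k2%:~R k3%:~R.
Proof.
move=> [A1 A2] hB.
have JF : J d.+1 (Phi A).
  split; apply: wle_Phi => m hm.
    by rewrite wv11 wv12 muln1 muln0 addn0 ltnS; have := A1 m hm; rewrite wt_wv.
  by rewrite wv21 wv22 muln1 muln0 add0n ltnS; have := A2 m hm; rewrite wt_wv.
have JT := J_Top JF.
exists (Pexpr (Phi A) (Top (Phi A)) (Phi (Top A))); split.
  by apply/degvarE; apply: degP.
move=> k1 k2 k3; rewrite evP.
apply: final_fun.
- exact: Phi_D.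
- exact: keyL.
- by move=> x y; rewrite Phi_D; apply: Dcomm => a b; apply: Phi_D.
- exact: Phi_x0.
- exact: Phi_0y.
Qed.

End Assembly.

Theorem lemma2 (R : realType) (Rdeg : nat) (A : {mpoly R[i][2]}) :
  degvar_le A (v1) Rdeg -> degvar_le A (v2) Rdeg ->
  totdeg_le (Top A) Rdeg ->
  (exists P : {mpoly R[i][3]},
     degvar_le P (inord 1) Rdeg.+2 /\
     forall k1 k2 k3 : int,
       isum k1 k2 (fun l1 => isum k2 k3 (fun l2 =>
              ev2 A l1%:~R l2%:~R))
       - ev2 A k2%:~R k2%:~R
       = ev3 P k1%:~R k2%:~R k3%:~R) /\
  (Top A = 0 ->
   exists P : {mpoly R[i][3]},
     degvar_le P (inord 1) Rdeg.+1 /\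
     forall k1 k2 k3 : int,
       isum k1 k2 (fun l1 => isum k2 k3 (fun l2 =>
              ev2 A l1%:~R l2%:~R))
       - ev2 A k2%:~R k2%:~R
       = ev3 P k1%:~R k2%:~R k3%:~R).
Proof.
move=> /degvarE h1 /degvarE h2 /totdegE hT.
have JA : J Rdeg A by split.
split.
  have hB : wle (@w1 2) (Phi (Top A)) Rdeg.+2.
    apply: wle_Phi => m /hT; rewrite wt2 /w1 !mul1n !muln1 addSn addnS.
    by move=> h; rewrite !ltnS.
  have [P [hP eP]] := core JA hB.
  exists P; split => //; move: hP; rewrite (_ : maxn _ _ = Rdeg.+2) //.
  by apply/maxn_idPl; rewrite leqnSn.
move=> T0.
have hB : wle (@w1 2) (Phi (Top A)) 0 by rewrite T0 Phi0; apply: wle0.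
have [P [hP eP]] := core JA hB.
by exists P; split => //; move: hP; rewrite max0n.
Qed.
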